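(* Let $G$ be a graph containing no induced triangle and no induced path on $5$ vertices. Then $\operatorname{reg}(G)$ equals the maximum, over all families $\{H_1,\dots,H_r\}$ of pairwise vertex-disjoint induced subgraphs of $G$ each isomorphic to $K_2$ or to the $5$-cycle $C_5$ and with no edges of $G$ between distinct $H_i$, of $(\#\{i:H_i\cong K_2\})+2(\#\{i:H_i\cong C_5\})$ (the empty family giving $0$).
   Context: $\operatorname{reg}(G)=\max\{j\ge0:\widetilde H_{j-1}(\operatorname{Ind}(G[S]);\Bbbk)\neq0\text{ for some }S\subseteq V(G)\}$ over a field $\Bbbk$, where $\operatorname{Ind}$ is the independence complex (regularity of $R/I(G)$ for the edge ideal). *)

(* Defs.v *)
From HB Require Import structures.
From mathcomp Require Import all_boot all_order all_algebra.
Set Implicit Arguments. Unset Strict Implicit. Unset Printing Implicit Defensive.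
Import GRing.Theory.

(* A finite simple graph: vertex type T (finType), adjacency e : rel T,
   assumed symmetric and irreflexive in the theorem. *)

Section Graphs.
Variable T : finType.
Variable e : rel T.

Definition indep (A : {set T}) : bool :=
  [forall x in A, forall y in A, ~~ e x y].

(* faces of Ind(G[S]) with exactly j vertices (dimension j-1);
   the empty face (j = 0) is included, so homology is reduced. *)
Definition faces (S : {set T}) (j : nat) : {set {set T}} :=
  [set A : {set T} | [&& A \subset S, indep A & #|A| == j]].

Variable F : fieldType.

(* Simplicial boundary map C_{j} -> C_{j-1}, from faces with j.+1 vertices
   to faces with j vertices; vertices ordered by enum_rank; sign (-1)^pos. *)
Definition bd (S : {set T}) (j : nat) : 'M[F]_(#|faces S j.+1|, #|faces S j|) :=
  \matrix_(i, k)
    (\sum_(v in (enum_val i : {set T}) | enum_val k == (enum_val i) :\ v)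
        (-1) ^+ #|[set u in (enum_val i : {set T}) | (enum_rank u < enum_rank v)%N]|)%R.

(* dim over F of the reduced homology H~_{j-1}(Ind(G[S]); F) *)
Definition betti (S : {set T}) (j : nat) : nat :=
  (#|faces S j| - (if j is j'.+1 then \rank (bd S j') else 0)
    - \rank (bd S j))%N.

(* reg(G) = max { j >= 0 : H~_{j-1}(Ind(G[S])) <> 0 for some S }.
   Any j with nonzero homology satisfies j <= #|T|, so bounding j < #|T|+2
   loses nothing. *)
Definition reg : nat :=
  \max_(j < #|T|.+2 | [exists S : {set T}, betti S j != 0%N]) (j : nat).

Definition isK2 (A : {set T}) : bool :=
  [exists x, exists y, (A == [set x; y]) && (x != y) && e x y].

Definition isC5 (A : {set T}) : bool :=
  [exists f : {ffun 'I_5 -> T},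
     [&& injectiveb f, A == [set f i | i : 'I_5] &
         [forall i : 'I_5, forall k : 'I_5,
            e (f i) (f k) == ((k == (i.+1 %% 5) :> nat) || (i == (k.+1 %% 5) :> nat))]]].

Definition admissible (P : {set {set T}}) : bool :=
  [&& [forall A in P, isK2 A || isC5 A],
      [forall A in P, forall B in P, (A != B) ==> [disjoint A & B]] &
      [forall A in P, forall B in P, (A != B) ==>
          [forall x in A, forall y in B, ~~ e x y]]].

Definition weight (P : {set {set T}}) : nat :=
  (#|[set A in P | isK2 A]| + 2 * #|[set A in P | isC5 A]|)%N.

Definition triangle_free : Prop :=
  forall x y z, e x y -> e y z -> e x z -> False.

Definition P5_free : Prop :=
  forall f : 'I_5 -> T, injective f ->
    ~ (forall i k : 'I_5,
         e (f i) (f k) = ((k == i.+1 :> nat) || (i == k.+1 :> nat))).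

End Graphs.

(* Main.v *)
Require Import Defs.
From HB Require Import structures.
From mathcomp Require Import all_boot all_order all_algebra.
From mathcomp Require Import ring zify.
Set Implicit Arguments. Unset Strict Implicit. Unset Printing Implicit Defensive.
Import Order.TTheory GRing.Theory Num.Theory.
Local Open Scope ring_scope.

Section Chains.
Variable T : finType.
Variable F : fieldType.

Definition sgn (A : {set T}) (v : T) : F :=
  (-1) ^+ #|[set u in A | (enum_rank u < enum_rank v)%N]|.

Definition bdf (c : {set T} -> F) (B : {set T}) : F :=
  \sum_(w | w \notin B) sgn (w |: B) w * c (w |: B).

Definition cone (v : T) (c : {set T} -> F) (A : {set T}) : F :=
  if v \in A then sgn A v * c (A :\ v) else 0.

Lemma sgnU1 (A : {set T}) (w v : T) : w \notin A ->
  sgn (w |: A) v = (if (enum_rank w < enum_rank v)%N then -1 else 1) * sgn A v.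
Proof.
move=> wA; rewrite /sgn.
have -> : [set u in w |: A | (enum_rank u < enum_rank v)%N] =
   if (enum_rank w < enum_rank v)%N then w |: [set u in A | (enum_rank u < enum_rank v)%N]
   else [set u in A | (enum_rank u < enum_rank v)%N].
  apply/setP=> u; rewrite !inE; case: ifP=> h; rewrite ?inE;
  by case: (eqVneq u w)=> [->|]; rewrite ?h ?(negbTE wA) //= orbF.
case: ifP=> _; last by rewrite mul1r.
by rewrite cardsU1 inE (negbTE wA) /= exprS.
Qed.

Lemma sgnU1_self (A : {set T}) (w : T) : sgn (w |: A) w = sgn A w.
Proof.
rewrite /sgn; congr (_ ^+ _); apply: eq_card=> u; rewrite !inE.
by case: (eqVneq u w)=> [->|]; rewrite ?ltnn ?andbF //= .
Qed.

Lemma sgn_sq (A : {set T}) (v : T) : sgn A v * sgn A v = 1.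
Proof. by rewrite /sgn -exprD addnn -mul2n exprM sqrrN !expr1n. Qed.

Lemma sgn_neq0 (A : {set T}) (v : T) : sgn A v != 0.
Proof. by rewrite /sgn signr_eq0. Qed.

Definition avoid (v : T) (c : {set T} -> F) := forall A : {set T}, v \in A -> c A = 0.

Lemma bdf_avoid (v : T) c : avoid v c -> avoid v (bdf c).
Proof.
move=> h B vB; rewrite /bdf big1 // => w _; rewrite h ?mulr0 //.
by rewrite inE vB orbT.
Qed.

Lemma cone_bdf (v : T) c : avoid v c -> forall B,
  bdf (cone v c) B = c B - cone v (bdf c) B.
Proof.
move=> hc B; rewrite /cone /bdf.
case: ifPn => vB.
  rewrite hc // sub0r -mulrN -sumrN big_distrr /=.
  rewrite [in RHS](bigD1 v) /=; last by rewrite !inE eqxx.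
  rewrite setD1K // hc // !(mulr0, oppr0) add0r.
  apply: eq_big.
    move=> w; rewrite in_setD1; case: (eqVneq w v)=> [->|] /=; by rewrite ?vB ?andbT.
  move=> w wB.
  have wv : w != v by apply: contraNneq wB => ->.
  rewrite inE vB orbT.
  have wB' : w \notin B :\ v by rewrite inE negb_and wB orbT.
  rewrite !sgnU1_self.
  have -> : (w |: B) :\ v = w |: (B :\ v).
    apply/setP=> u; rewrite !inE; case: (eqVneq u v)=> [->|] /=.
      by rewrite eq_sym (negbTE wv).
    by [].
  rewrite (sgnU1 v wB).
  have vB' : v \notin B :\ v by rewrite !inE eqxx.
  have Bv : B = v |: (B :\ v) by rewrite setD1K.
  rewrite [in sgn B w]Bv (sgnU1 w vB').
  have hne : enum_rank w != enum_rank v by rewrite (inj_eq enum_rank_inj).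
  case: (ltngtP (enum_rank w) (enum_rank v)) => h; [ring | ring | by move: hne; rewrite -(inj_eq val_inj) /= h eqxx].
rewrite subr0 (bigD1 v) //= setU11 setU1K // mulrA sgn_sq mul1r big1 ?addr0 // => w /andP[wB wv].
by rewrite in_setU1 eq_sym (negbTE wv) (negbTE vB) mulr0.
Qed.

Lemma bdf_ext c d : (forall A, c A = d A) -> forall B, bdf c B = bdf d B.
Proof. by move=> h B; apply: eq_bigr=> w _; rewrite h. Qed.

Lemma bdfD c d B : bdf (fun A => c A + d A) B = bdf c B + bdf d B.
Proof. by rewrite /bdf -big_split; apply: eq_bigr=> w _; rewrite mulrDr. Qed.

Lemma bdfN c B : bdf (fun A => - c A) B = - bdf c B.
Proof. by rewrite /bdf -sumrN; apply: eq_bigr=> w _; rewrite mulrN. Qed.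

Lemma bdf0 B : bdf (fun _ => 0) B = 0.
Proof. by rewrite /bdf big1 // => w _; rewrite mulr0. Qed.

Lemma cone_ext (v : T) c d : (forall A, c A = d A) -> forall A, cone v c A = cone v d A.
Proof. by move=> h A; rewrite /cone h. Qed.

Definition dec0 (v : T) (c : {set T} -> F) (A : {set T}) : F :=
  if v \in A then 0 else c A.
Definition dec1 (v : T) (c : {set T} -> F) (A : {set T}) : F :=
  if v \in A then 0 else sgn (v |: A) v * c (v |: A).

Lemma dec0_avoid v c : avoid v (dec0 v c).
Proof. by move=> A vA; rewrite /dec0 vA. Qed.
Lemma dec1_avoid v c : avoid v (dec1 v c).
Proof. by move=> A vA; rewrite /dec1 vA. Qed.

Lemma decE (v : T) c A : c A = dec0 v c A + cone v (dec1 v c) A.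
Proof.
rewrite /dec0 /cone /dec1; case: ifPn=> vA; last by rewrite addr0.
by rewrite add0r !inE eqxx /= setD1K // mulrA sgn_sq mul1r.
Qed.

Lemma bdf_decE (v : T) c B :
  bdf c B = bdf (dec0 v c) B + dec1 v c B - cone v (bdf (dec1 v c)) B.
Proof.
rewrite (bdf_ext (decE v c)) bdfD (cone_bdf (@dec1_avoid v c)) addrA //.
Qed.

Lemma cycle_dec (v : T) c : (forall B, bdf c B = 0) ->
  (forall B, dec1 v c B = - bdf (dec0 v c) B) /\ (forall B, bdf (dec1 v c) B = 0).
Proof.
move=> hc; split=> B.
  have := hc B; rewrite (bdf_decE v).
  case: (boolP (v \in B)) => vB.
    by rewrite (@dec1_avoid v c _ vB) (bdf_avoid (@dec0_avoid v c) vB) oppr0.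
  rewrite /cone (negbTE vB) subr0 => /eqP; rewrite addrC addr_eq0 => /eqP //.
case: (boolP (v \in B)) => vB; first by rewrite (bdf_avoid (@dec1_avoid v c) vB).
have := hc (v |: B); rewrite (bdf_decE v).
rewrite (@dec1_avoid v c _ (setU11 v B)) (bdf_avoid (@dec0_avoid v c) (setU11 v B)).
rewrite add0r sub0r /cone setU11 setU1K // => /eqP; rewrite oppr_eq0 mulf_eq0.
by rewrite (negbTE (sgn_neq0 _ _)) /= => /eqP.
Qed.

End Chains.

Section Upper.
Variables (T : finType) (e : rel T) (F : fieldType).
Hypotheses (e_sym : symmetric e) (e_irr : irreflexive e).

Definition supp (S : {set T}) j (c : {set T} -> F) :=
  forall A, c A != 0 -> A \in faces e S j.
Definition CB (S : {set T}) j := forall c, supp S j c -> (forall B, bdf c B = 0) ->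
  exists d, supp S j.+1 d /\ forall B, bdf d B = c B.

Lemma indepP (A : {set T}) :
  reflect (forall x y, x \in A -> y \in A -> ~~ e x y) (indep e A).
Proof.
apply: (iffP idP) => [/forall_inP h x y xA yA | h].
  exact: (forall_inP (h x xA)).
by apply/forall_inP=> x xA; apply/forall_inP=> y yA; exact: h.
Qed.

Lemma indep_sub (A B : {set T}) : A \subset B -> indep e B -> indep e A.
Proof.
move=> sAB /indepP h; apply/indepP=> x y xA yA; apply: h; exact: (subsetP sAB).
Qed.

Lemma indepU1 (v : T) (A : {set T}) : indep e A -> (forall y, y \in A -> ~~ e v y) ->
  indep e (v |: A).
Proof.
move=> /indepP hA hv; apply/indepP=> x y; rewrite !in_setU1.
case/orP=> [/eqP->|xA]; case/orP=> [/eqP->|yA].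
- by rewrite e_irr.
- exact: hv.
- by rewrite e_sym; exact: hv.
- exact: hA.
Qed.

Lemma facesP (S A : {set T}) j :
  reflect [/\ A \subset S, indep e A & #|A| = j] (A \in faces e S j).
Proof.
rewrite /faces inE; apply: (iffP and3P) => [[a b /eqP c]|[a b c]]; split=> //.
by rewrite c.
Qed.

Lemma faces_sub (S1 S2 A : {set T}) j : S1 \subset S2 -> A \in faces e S1 j -> A \in faces e S2 j.
Proof.
move=> s12 /facesP [a b c]; apply/facesP; split=> //; exact: subset_trans s12.
Qed.

Lemma neq0_add (x y : F) : x + y != 0 -> x != 0 \/ y != 0.
Proof.
case: (eqVneq x 0) => [->|]; last by left.
by rewrite add0r; right.
Qed.

Lemma step (S : {set T}) (v : T) j : v \in S ->
  CB (S :\ v) j ->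
  (forall c, supp S j c -> (forall B, bdf c B = 0) -> exists b,
      supp [set u in S | (u != v) && ~~ e v u] j b /\ forall B, bdf b B = dec1 v c B) ->
  CB S j.
Proof.
set N := [set u in S | _].
move=> vS hS' hb c sc cc.
have [h1 h2] := cycle_dec v cc.
have [b [sb bb]] := hb c sc cc.
have {}sc : forall A, c A != 0 -> A \in faces e S j := sc.
have {}sb : forall A, b A != 0 -> A \in faces e N j := sb.
have sNS : N \subset S :\ v.
  by apply/subsetP=> u; rewrite !inE => /andP[-> /andP[-> _]].
have bv : avoid v b.
  move=> A vA; apply/eqP; apply: contraT => /sb /facesP [sA _ _].
  by move/(subsetP sA): vA; rewrite !inE eqxx /= andbF.
pose c' A := dec0 v c A + b A.
have sc' : supp (S :\ v) j c'.
  move=> A /neq0_add [h|h].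
    move: h; rewrite /dec0; case: ifPn=> vA; first by rewrite eqxx.
    move=> /sc /facesP [sA iA cA].
    by apply/facesP; split=> //; rewrite subsetD1 sA.
  exact: faces_sub sNS (sb _ h).
have cc' : forall B, bdf c' B = 0.
  by move=> B; rewrite /c' bdfD bb h1 addrN.
have [d' [sd' dd']] := hS' c' sc' cc'.
have {}sd' : forall A, d' A != 0 -> A \in faces e (S :\ v) j.+1 := sd'.
exists (fun A => d' A - cone v b A); split.
  move=> A /= /neq0_add [h|h].
    exact: faces_sub (subD1set S v) (sd' _ h).
  move: h; rewrite oppr_eq0 /cone; case: ifPn=> vA; last by rewrite eqxx.
  rewrite mulf_eq0 negb_or => /andP[_ /sb /facesP [sA iA cA]].
  have sAN := subsetP sA.
  apply/facesP; split.
  - apply/subsetP=> u uA; case: (eqVneq u v) => [->//|uv].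
    by have := sAN u; rewrite !inE uv uA /= => /(_ isT) /andP[].
  - rewrite -(setD1K vA); apply: indepU1 => // y /sAN; rewrite inE => /andP[_ /andP[]] //.
  - by rewrite -(setD1K vA) cardsU1 !inE eqxx /= cA.
move=> B.
rewrite bdfD bdfN dd' (cone_bdf bv) /c' (cone_ext v bb) (decE v c B).
ring.
Qed.

Definition Wt (S : {set T}) : nat :=
  \max_(P : {set {set T}} | admissible e P && [forall A in P, A \subset S]) weight e P.

Lemma Wt_mono (S1 S2 : {set T}) : S1 \subset S2 -> (Wt S1 <= Wt S2)%N.
Proof.
move=> s12; apply/bigmax_leqP=> P /andP[aP /forall_inP sP].
apply: leq_bigmax_cond; rewrite aP /=; apply/forall_inP=> A AP.
exact: subset_trans (sP A AP) s12.
Qed.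

Definition deg (S : {set T}) (w : T) := #|[set u in S | e w u]|.

Lemma cb_empty j : (0 < j)%N -> CB set0 j.
Proof.
move=> j0 c sc _; exists (fun _ => 0); split=> [A|B]; first by rewrite eqxx.
have : c B = 0.
  apply/eqP; apply: contraT => /sc /facesP [sA _ cA].
  by move: sA; rewrite subset0 => /eqP hA; move: cA j0; rewrite hA cards0 => <-.
by move=> ->; rewrite bdf0.
Qed.

Lemma dec1_supp (S : {set T}) (v : T) j c : supp S j c ->
  supp [set u in S | (u != v) && ~~ e v u] j.-1 (dec1 v c).
Proof.
move=> sc A; rewrite /dec1; case: ifPn=> vA; first by rewrite eqxx.
rewrite mulf_eq0 negb_or => /andP[_ /sc /facesP [sA iA cA]].
apply/facesP; split.
- apply/subsetP=> u uA; rewrite !inE.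
  have uS : u \in S by apply: (subsetP sA); rewrite !inE uA orbT.
  have uv : u != v by apply: contraNneq vA => <-.
  rewrite uS uv /=; apply: (indepP _ iA); by rewrite !inE ?eqxx ?uA ?orbT.
- by apply: indep_sub iA; apply/subsetP=> u uA; rewrite !inE uA orbT.
- by move: cA; rewrite cardsU1 (negbTE vA) add1n => <-.
Qed.

Lemma upper_gen
  (Hgrow : forall (S : {set T}) (v : T), v \in S -> (exists2 u, u \in S & e v u) ->
     (forall w, w \in S -> deg S w <= deg S v)%N ->
     (Wt [set u in S | (u != v) && ~~ e v u] < Wt S)%N) :
  forall n (S : {set T}) j, (#|S| <= n)%N -> (Wt S < j)%N -> CB S j.
Proof.
elim=> [|n IH] S j hS hj.
  by move: hS; rewrite leqn0 cards_eq0 => /eqP ->; apply: cb_empty; apply: leq_ltn_trans hj.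
case: (set_0Vmem S) => [->|[v0 v0S]]; first by apply: cb_empty; apply: leq_ltn_trans hj.
case: (arg_maxnP (deg S) v0S) => v vS vmax.
have {}vS : v \in S := vS.
have {}vmax : forall w, w \in S -> (deg S w <= deg S v)%N := vmax.
have cSv : (#|S :\ v| <= n)%N by move: hS; rewrite (cardsD1 v S) vS add1n ltnS.
have sNS : [set u in S | (u != v) && ~~ e v u] \subset S :\ v.
  by apply/subsetP=> u; rewrite !inE => /andP[-> /andP[-> _]].
apply: (step vS).
  apply: IH => //; apply: leq_ltn_trans hj; apply: Wt_mono; exact: subD1set.
move=> c sc cc.
have [h1 h2] := cycle_dec v cc.
case: (boolP [exists u in S, e v u]) => [/exists_inP [u uS vu]|hn].
  have hlt := Hgrow S v vS (ex_intro2 _ _ u uS vu) vmax.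
  have j0 : (0 < j)%N by apply: leq_ltn_trans hj.
  have [b [sb bb]] : exists b, supp [set u in S | (u != v) && ~~ e v u] j.-1.+1 b /\
      forall B, bdf b B = dec1 v c B.
    apply: (IH _ j.-1 _ _ (dec1 v c) (dec1_supp sc) h2).
      exact: leq_trans (subset_leq_card sNS) cSv.
    by rewrite -ltnS prednK //; apply: leq_ltn_trans hlt _ .
  by exists b; rewrite prednK // in sb; split.
exists (fun A => - dec0 v c A); split; last first.
  by move=> B; rewrite bdfN h1.
move=> A /=; rewrite oppr_eq0 /dec0; case: ifPn=> vA; first by rewrite eqxx.
move=> /sc /facesP [sA iA cA]; apply/facesP; split=> //.
apply/subsetP=> u uA; rewrite !inE (subsetP sA u uA) /=.
have -> : u != v by apply: contraNneq vA => <-.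
apply: contra hn => vu; apply/exists_inP; exists u => //; exact: (subsetP sA).
Qed.

End Upper.

Section Bridge.
Variables (T : finType) (e : rel T) (F : fieldType).

Lemma bdf_outside (S B : {set T}) j (c : {set T} -> F) : supp e S j.+1 c ->
  B \notin faces e S j -> bdf c B = 0.
Proof.
move=> sc hB; rewrite /bdf big1 // => w wB.
case: (eqVneq (c (w |: B)) 0) => [->|/sc /facesP [sA iA cA]]; first by rewrite mulr0.
case/negP: hB; apply/facesP; split.
- by apply: subset_trans sA; apply/subsetP=> u uB; rewrite !inE uB orbT.
- by apply: indep_sub iA; apply/subsetP=> u uB; rewrite !inE uB orbT.
- by move: cA; rewrite cardsU1 wB add1n => /eqP; rewrite eqSS => /eqP.
Qed.

Lemma bridge (S : {set T}) j (d : {set T} -> F) : supp e S j.+1 d ->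
  forall k : 'I_#|faces e S j|,
  ((\row_i d (enum_val i)) *m bd e F S j) 0 k = bdf d (enum_val k).
Proof.
move=> sd k; set B := enum_val k.
rewrite !mxE.
transitivity (\sum_(A in faces e S j.+1) d A * \sum_(v in A | B == A :\ v) sgn F A v).
  rewrite [RHS]big_enum_val /=; apply: eq_bigr => i _; rewrite !mxE.
  by [].
transitivity (\sum_A d A * \sum_(v in A | B == A :\ v) sgn F A v).
  rewrite [in RHS](bigID (fun A => A \in faces e S j.+1)) /= [X in _ = _ + X]big1 ?addr0 //.
  move=> A hA; case: (eqVneq (d A) 0) => [->|/sd]; first by rewrite mul0r.
  by rewrite (negbTE hA).
transitivity (\sum_(A : {set T}) \sum_(v : T) (if (v \in A) && (B == A :\ v) then sgn F A v * d A else 0)).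
  apply: eq_bigr => A _; rewrite big_distrr /= big_mkcond /=.
  apply: eq_bigr => v _; case: ifP => _ //; by rewrite ?mulr0 // mulrC.
rewrite exchange_big /bdf [in RHS]big_mkcond /=; apply: eq_bigr => v _.
case: ifPn => vB.
  rewrite -big_mkcond (big_pred1 (v |: B)) //.
  move=> A /=; apply/idP/eqP => [/andP[vA /eqP ->]|->]; first by rewrite setD1K.
  by rewrite setU11 setU1K // eqxx.
rewrite big1 // => A _; case: ifP => // /andP[_ /eqP hB].
by move: vB; rewrite hB !inE eqxx.
Qed.

Lemma row_sub_bd (S : {set T}) k (x : 'rV_#|faces e S k.+1|) :
  (forall c : {set T} -> F, supp e S k.+1 c -> (forall B, bdf c B = 0) ->
     exists d, supp e S k.+2 d /\ forall B, bdf d B = c B) ->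
  x *m bd e F S k = 0 -> (x <= bd e F S k.+1)%MS.
Proof.
move=> H hx.
pose c (A : {set T}) := \sum_(i | enum_val i == A) x 0 i.
have cE : forall i, c (enum_val i) = x 0 i.
  move=> i; rewrite /c (big_pred1 i) // => i'; exact: (inj_eq enum_val_inj).
have sc : supp e S k.+1 c.
  move=> A; case: (boolP (A \in faces e S k.+1)) => // hA; rewrite /c big_pred0 ?eqxx // => i.
  by apply: contraNF hA => /eqP <-; exact: enum_valP.
have xE : x = \row_i c (enum_val i) by apply/rowP => i; rewrite mxE cE.
have cc : forall B, bdf c B = 0.
  move=> B; case: (boolP (B \in faces e S k)) => hB; last exact: bdf_outside sc hB.
  rewrite -(enum_rankK_in hB hB) -bridge // -xE hx mxE //.
have [d [sd dd]] := H c sc cc.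
have -> : x = (\row_i d (enum_val i)) *m bd e F S k.+1.
  by apply/rowP => i; rewrite bridge // dd cE.
exact: submxMl.
Qed.

Lemma betti_eq0 (S : {set T}) k :
  (forall c : {set T} -> F, supp e S k.+1 c -> (forall B, bdf c B = 0) ->
     exists d, supp e S k.+2 d /\ forall B, bdf d B = c B) ->
  betti e F S k.+1 = 0%N.
Proof.
move=> H; rewrite /betti -subnDA; apply/eqP; rewrite subn_eq0.
set M := bd e F S k; set N := bd e F S k.+1.
have hk : (kermx M <= N)%MS.
  apply/row_subP => i; apply: row_sub_bd H _.
  by rewrite -row_mul mulmx_ker row0.
apply: (@leq_trans (\rank (kermx M) + \rank M)).
  by rewrite mxrank_ker subnK // rank_leq_row.
by rewrite addnC leq_add2l; exact: mxrankS.
Qed.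
End Bridge.

Definition adj5 (i k : 'I_5) : bool :=
  ((k == (i.+1 %% 5)%N :> nat) || (i == (k.+1 %% 5)%N :> nat)).

Lemma indep5 (I : {set 'I_5}) : (forall i k, i \in I -> k \in I -> ~~ adj5 i k) ->
  (#|I| <= 2)%N.
Proof.
move=> h.
have sub : (@ordS 5) @: I \subset ~: I.
  apply/subsetP=> y /imsetP [i iI ->]; rewrite inE; apply/negP=> hI.
  by move: (h i _ iI hI); rewrite /adj5 eqxx.
have := subset_leq_card sub; rewrite card_imset; last exact: ordS_inj.
have := cardsC I; rewrite card_ord.
move=> h1 h2; have : (#|I| + #|I| <= 5)%N by apply: (leq_trans _ (eq_leq h1)); rewrite leq_add2l.
by case: #|I| => [|[|[|n]]] //; rewrite !addSn !addnS.
Qed.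

Section Lower.
Variables (T : finType) (e : rel T) (F : fieldType).
Hypotheses (e_sym : symmetric e) (e_irr : irreflexive e).

Lemma isK2P (A : {set T}) : isK2 e A -> exists a b, [/\ A = [set a; b], a != b & e a b].
Proof. by case/existsP => a /existsP [b /andP[/andP[/eqP -> ab] eab]]; exists a, b. Qed.

Lemma isC5P (A : {set T}) : isC5 e A -> exists f : {ffun 'I_5 -> T},
  [/\ injective f, A = [set f i | i : 'I_5] & forall i k, e (f i) (f k) = adj5 i k].
Proof.
case/existsP => f /and3P [/injectiveP fi /eqP -> /forallP h]; exists f; split=> // i k.
exact/eqP/(forallP (h i) k).
Qed.

Lemma card_K2 (A : {set T}) : isK2 e A -> #|A| = 2%N.
Proof. by case/isK2P=> a [b [-> ab _]]; rewrite cards2 ab. Qed.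

Lemma card_C5 (A : {set T}) : isC5 e A -> #|A| = 5%N.
Proof. by case/isC5P=> f [fi -> _]; rewrite card_imset // card_ord. Qed.

Lemma K2notC5 (A : {set T}) : isK2 e A -> ~~ isC5 e A.
Proof. by move=> h; apply/negP=> /card_C5; rewrite card_K2. Qed.

Lemma supp_add (S : {set T}) j (c d : {set T} -> F) : supp e S j c -> supp e S j d ->
  supp e S j (fun A => c A + d A).
Proof. by move=> sc sd A /neq0_add [h|h]; [exact: sc | exact: sd]. Qed.

Lemma supp_opp (S : {set T}) j (c : {set T} -> F) : supp e S j c -> supp e S j (fun A => - c A).
Proof. by move=> sc A; rewrite oppr_eq0; exact: sc. Qed.

Lemma avoid_supp (S : {set T}) j (v : T) (c : {set T} -> F) : supp e S j c -> v \notin S -> avoid v c.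
Proof.
move=> sc vS A vA; apply/eqP; apply: contraT => /sc /facesP [sA _ _].
by move: vS; rewrite (subsetP sA v vA).
Qed.

Lemma avoid_cone (p q : T) (z : {set T} -> F) : avoid p z -> p != q -> avoid p (cone q z).
Proof.
move=> hz pq A pA; rewrite /cone; case: ifP => // _; rewrite hz ?mulr0 //.
by rewrite !inE pq.
Qed.

Lemma cone_supp (U S : {set T}) j (v : T) (z : {set T} -> F) : supp e U j z -> v \in S ->
  U \subset S -> (forall y, y \in U -> (v != y) && ~~ e v y) -> supp e S j.+1 (cone v z).
Proof.
move=> sz vS sUS hv A; rewrite /cone; case: ifPn => vA; last by rewrite eqxx.
rewrite mulf_eq0 negb_or => /andP[_ /sz /facesP [sA iA cA]].
have vA' : v \notin A :\ v by rewrite !inE eqxx.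
rewrite -(setD1K vA); apply/facesP; split.
- by rewrite subUset sub1set vS (subset_trans sA sUS).
- apply: indepU1 => // y /(subsetP sA) /hv /andP[] //.
- by rewrite cardsU1 vA' cA.
Qed.

Lemma cone0 (v : T) (c : {set T} -> F) : (forall A, c A = 0) -> forall A, cone v c A = 0.
Proof. by move=> h A; rewrite /cone h mulr0; case: ifP. Qed.

Lemma cone2_bdf (p q : T) (z : {set T} -> F) : avoid q z -> avoid p (cone q z) ->
  (forall B, bdf z B = 0) -> forall B, bdf (cone p (cone q z)) B = cone q z B - cone p z B.
Proof.
move=> hq hp cz B; rewrite (cone_bdf hp); congr (_ - _).
apply: cone_ext => A; rewrite (cone_bdf hq) (cone0 _ cz) subr0 //.
Qed.

Definition sepr (A B : {set T}) : bool :=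
  [disjoint A & B] && [forall x in A, forall y in B, ~~ e x y].

Definition Ucup (s : seq {set T}) : {set T} := \bigcup_(A <- s) A.
Definition wsum (s : seq {set T}) : nat := (\sum_(A <- s) (if isK2 e A then 1 else 2))%N.

Lemma inUcup (s : seq {set T}) y : y \in Ucup s -> exists2 A, A \in s & y \in A.
Proof.
elim: s => [|A s IH]; first by rewrite /Ucup big_nil inE.
rewrite /Ucup big_cons inE => /orP [h|/IH [B Bs yB]].
  by exists A; rewrite ?inE ?eqxx.
by exists B; rewrite // inE Bs orbT.
Qed.


Lemma build (s : seq {set T}) : all (fun A => isK2 e A || isC5 e A) s -> pairwise sepr s ->
  exists z : {set T} -> F, [/\ supp e (Ucup s) (wsum s) z, (forall B, bdf z B = 0),
    (exists A, z A != 0) &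
    (forall A : {set T}, A \subset Ucup s -> indep e A -> (#|A| <= wsum s)%N)].
Proof.
elim: s => [|H s IH] /=.
  move=> _ _; rewrite /Ucup /wsum !big_nil.
  exists (fun A => if A == set0 then 1 else 0); split.
  - move=> A /=; case: ifPn => [/eqP -> _|_]; last by rewrite eqxx.
    apply/facesP; split; rewrite ?sub0set ?cards0 //.
    by apply/indepP => x y; rewrite inE.
  - move=> B; rewrite /bdf big1 // => w _.
    have -> : (w |: B == set0) = false.
      by apply/negbTE/set0Pn; exists w; rewrite setU11.
    by rewrite mulr0.
  - by exists set0; rewrite eqxx oner_neq0.
  - by move=> A; rewrite subset0 => /eqP -> _; rewrite cards0.
move=> /andP[hH hs] /andP[sepH ps].
have [z [sz cz [A0 zA0] bz]] := IH hs ps.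
rewrite /Ucup /wsum !big_cons -/(Ucup s) -/(wsum s).
set U := Ucup s; set w := wsum s.
have hU : forall x y, x \in H -> y \in U -> (x != y) && ~~ e x y.
  move=> x y xH /inUcup [A As yA].
  have /andP [dHA /forall_inP hHA] := allP sepH A As.
  have /forall_inP := hHA x xH => /(_ y yA) ->; rewrite andbT.
  by apply: contraTneq yA => <-; rewrite (disjointFr dHA xH).
have A0U : A0 \subset U by have /facesP [] := sz _ zA0.
have nU : forall x, x \in H -> x \notin U.
  by move=> x xH; apply/negP => /(hU x x xH); rewrite eqxx.
have nA0 : forall x, x \in H -> x \notin A0.
  by move=> x xH; apply: contra (nU x xH); exact: (subsetP A0U).
have avz : forall x, x \in H -> avoid x z.
  by move=> x xH; apply: avoid_supp sz (nU x xH).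
have sUHU : U \subset H :|: U by exact: subsetUr.
have cs1 : forall x, x \in H -> supp e (H :|: U) w.+1 (cone x z).
  move=> x xH; apply: cone_supp sz _ sUHU (hU x ^~ xH) => //.
  by rewrite inE xH.
have bnd : forall A : {set T}, A \subset H :|: U -> indep e A -> (#|A :&: H| <= 2)%N ->
    ((#|A :&: H| <= 1)%N \/ ~~ isK2 e H) ->
    (#|A| <= (if isK2 e H then 1 else 2) + w)%N.
  move=> A sA iA h2 h1; rewrite -(cardsID H A); apply: leq_add.
    by case: ifP h1 => // hk [] // /negP.
  apply: bz; last by apply: indep_sub iA; exact: subsetDl.
  apply/subsetP=> x; rewrite !inE => /andP[xH xA].
  by have := subsetP sA x xA; rewrite inE (negbTE xH).
case: (boolP (isK2 e H)) => hK.
  have [a [b [HE ab eab]]] := isK2P hK.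
  have aH : a \in H by rewrite HE !inE eqxx.
  have bH : b \in H by rewrite HE !inE eqxx orbT.
  exists (fun A => cone a z A - cone b z A); split.
  - exact: supp_add (cs1 a aH) (supp_opp (cs1 b bH)).
  - move=> B; rewrite bdfD bdfN (cone_bdf (avz a aH)) (cone_bdf (avz b bH)).
    by rewrite !(cone0 _ cz) subrr.
  - exists (a |: A0); rewrite /cone setU11 setU1K ?(nA0 a aH) //.
    have -> : (b \in a |: A0) = false.
      by rewrite in_setU1 (negbTE (nA0 b bH)) orbF; apply/negbTE; rewrite eq_sym.
    rewrite subr0.
    by rewrite mulf_neq0 // sgn_neq0.
  - move=> A sA iA.
    have h1 : (#|A :&: H| <= 1)%N.
      case: (boolP (a \in A)) => aA.
        have bA : b \notin A.
          by apply/negP => bA; have /indepP := iA; move=> /(_ a b aA bA); rewrite eab.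
        rewrite -(cards1 a); apply: subset_leq_card; apply/subsetP => x.
        rewrite !inE HE !inE => /andP[xA /orP [//|/eqP xb]].
        by rewrite -xb xA in bA.
      rewrite -(cards1 b); apply: subset_leq_card; apply/subsetP => x.
      rewrite !inE HE !inE => /andP[xA /orP [/eqP xa|//]].
      by rewrite -xa xA in aA.
    by have := bnd A sA iA (leq_trans h1 (leqnSn 1)) (or_introl h1); rewrite hK.
have hC : isC5 e H by move: hH; rewrite (negbTE hK).
have [f [fi HE fe]] := isC5P hC.
pose o0 := @Ordinal 5 0 isT; pose o1 := @Ordinal 5 1 isT; pose o2 := @Ordinal 5 2 isT.
pose o3 := @Ordinal 5 3 isT; pose o4 := @Ordinal 5 4 isT.
have fH : forall i, f i \in H by move=> i; rewrite HE imset_f.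
have fne : forall i k, i != k -> f i != f k by move=> i k; rewrite (inj_eq fi).
have cs2 : forall i k, i != k -> ~~ adj5 i k ->
    supp e (H :|: U) w.+2 (cone (f i) (cone (f k) z)).
  move=> i k ik aik.
  apply: (cone_supp (U := f k |: U) (S := H :|: U)).
  - apply: cone_supp sz _ (subsetUr _ _) _; first by rewrite setU11.
    by move=> y /(hU _ y (fH k)).
  - by rewrite inE fH.
  - by rewrite subUset sub1set inE fH subsetUr.
  - move=> y; rewrite in_setU1 => /orP [/eqP ->|]; last exact: hU (fH i).
    by rewrite fne // fe aik.
have av2 : forall i k, i != k -> avoid (f i) (cone (f k) z).
  by move=> i k ik; apply: avoid_cone (avz _ (fH i)) (fne _ _ ik).
pose t i k := cone (f i) (cone (f k) z).
exists (fun A => t o0 o2 A + t o2 o4 A + t o4 o1 A + t o1 o3 A + t o3 o0 A); split.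
- by repeat apply: supp_add; apply: cs2.
- have c2 : forall i k, i != k -> forall B, bdf (t i k) B = cone (f k) z B - cone (f i) z B.
    by move=> i k ik B; apply: cone2_bdf => //; [exact: avz | exact: av2].
  move=> B; rewrite !bdfD !c2 //; ring.
- exists (f o0 |: (f o2 |: A0)).
  have cn : forall (p : T) (c : {set T} -> F) (A : {set T}), p \notin A -> cone p c A = 0.
    by move=> p c A pA; rewrite /cone (negbTE pA).
  have cn2 : forall (p q : 'I_5) (A : {set T}), f q \notin A -> t p q A = 0.
    move=> p q A qA; rewrite /t /cone; case: ifP => // _.
    by rewrite ifN ?mulr0 // !inE negb_and qA orbT.
  have nA : forall i, i != o0 -> i != o2 -> f i \notin f o0 |: (f o2 |: A0).
    by move=> i i0 i2; rewrite !in_setU1 !negb_or !fne // nA0.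
  rewrite (cn2 _ o4) ?nA // (cn2 _ o1) ?nA // (cn2 _ o3) ?nA // /t (cn (f o3)) ?nA //.
  rewrite !addr0 /cone setU11 setU1K; last by rewrite in_setU1 negb_or fne // nA0.
  by rewrite setU11 setU1K ?nA0 // !mulf_neq0 ?sgn_neq0.
- move=> A sA iA.
  have h2 : (#|A :&: H| <= 2)%N.
    have -> : A :&: H = f @: [set i | f i \in A].
      apply/setP=> x; rewrite inE HE; apply/andP/imsetP => [[xA /imsetP [i _ xE]]|[i]].
        by exists i => //; rewrite inE -xE.
      by rewrite inE => fA ->; rewrite imset_f.
    rewrite card_imset //; apply: indep5 => i k; rewrite !inE => iA' kA'.
    by rewrite -fe; have /indepP := iA; apply.
  by have := bnd A sA iA h2 (or_intror hK); rewrite (negbTE hK).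
Qed.
End Lower.

Lemma rank_lt (F : fieldType) m n (M : 'M[F]_(m, n)) (x : 'rV_m) :
  x != 0 -> x *m M = 0 -> (\rank M < m)%N.
Proof.
move=> x0 xM; rewrite ltn_neqAle rank_leq_row andbT.
apply/negP => /eqP hr.
have rf : row_free M by rewrite /row_free hr.
have : x *m M = 0 *m M by rewrite mul0mx.
by move/(row_free_inj rf) => x0'; rewrite x0' eqxx in x0.
Qed.

Lemma uniq_pairwise (X : eqType) (r : rel X) (s : seq X) : uniq s ->
  (forall x y, x \in s -> y \in s -> x != y -> r x y) -> pairwise r s.
Proof.
elim: s => [|x s IH] //= /andP[xs us] h; apply/andP; split.
  apply/allP=> y ys; apply: h; rewrite ?inE ?eqxx ?ys ?orbT //.
  by apply: contraNneq xs => ->.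
apply: IH => // a b a_s b_s; apply: h; by rewrite inE ?a_s ?b_s orbT.
Qed.

Section Final.
Variables (T : finType) (e : rel T) (F : fieldType).
Hypotheses (e_sym : symmetric e) (e_irr : irreflexive e).

Lemma sum_bool_card (P : {set {set T}}) (b : pred {set T}) :
  (\sum_(A in P) (b A : nat))%N = #|[set A in P | b A]|.
Proof.
rewrite -sum1_card [RHS](eq_bigl (fun A => (A \in P) && b A)); last by move=> A; rewrite inE.
by rewrite big_mkcondr /=; apply: eq_bigr => A _; case: (b A).
Qed.

Lemma wsum_weight (P : {set {set T}}) : admissible e P -> wsum e (enum P) = weight e P.
Proof.
case/and3P => /forall_inP hk _ _.
rewrite /wsum big_enum /weight -!sum_bool_card big_distrr -big_split /=.
apply: eq_bigr => A /hk; case: (boolP (isK2 e A)) => hK /=.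
  by rewrite (negbTE (K2notC5 hK)).
by move=> ->.
Qed.

Lemma betti_lower (S : {set T}) w (z : {set T} -> F) :
  supp e S w z -> (forall B, bdf z B = 0) -> (exists A, z A != 0) ->
  (forall A : {set T}, A \subset S -> indep e A -> (#|A| <= w)%N) ->
  betti e F S w != 0%N.
Proof.
move=> sz cz [A0 zA0] bz.
have r0 : \rank (bd e F S w) = 0%N.
  apply/eqP; rewrite -leqn0; apply: leq_trans (rank_leq_row _) _.
  rewrite leqn0 cards_eq0; apply/eqP/setP => A; rewrite in_set0; apply/negP.
  by move=> /facesP [sA iA cA]; have := bz A sA iA; rewrite cA ltnn.
rewrite /betti r0 subn0.
have hA0 := sz _ zA0.
case: w sz cz bz hA0 r0 => [|k] sz cz bz hA0 r0.
  by rewrite subn0 -lt0n card_gt0; apply/set0Pn; exists A0.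
rewrite subn_eq0 -ltnNge.
pose x := \row_i z (enum_val i) : 'rV[F]_#|faces e S k.+1|.
apply: (@rank_lt _ _ _ _ x).
  apply/negP => /eqP x0.
  have := congr1 (fun M : 'rV_ _ => M 0 (enum_rank_in hA0 A0)) x0.
  by rewrite !mxE enum_rankK_in // => hz; rewrite hz eqxx in zA0.
apply/rowP => k'; rewrite bridge // cz mxE //.
Qed.

Lemma Wt_setT : Wt e setT = \max_(P | admissible e P) weight e P.
Proof.
rewrite /Wt; apply: eq_bigl => P; case: (admissible e P) => //=.
by apply/forall_inP => A _; exact: subsetT.
Qed.

Lemma main_gen
  (Hgrow : forall (S : {set T}) (v : T), v \in S -> (exists2 u, u \in S & e v u) ->
     (forall w, w \in S -> deg e S w <= deg e S v)%N ->
     (Wt e [set u in S | (u != v) && ~~ e v u] < Wt e S)%N) :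
  reg e F = \max_(P | admissible e P) weight e P.
Proof.
rewrite -Wt_setT; apply/eqP; rewrite eqn_leq; apply/andP; split.
  apply/bigmax_leqP => j /existsP [S hS]; rewrite leqNgt; apply/negP => hj.
  have Wj : (Wt e S < j)%N by apply: leq_ltn_trans hj; apply: Wt_mono; exact: subsetT.
  case: j hS hj Wj => [[|k] hk] hS hj Wj //=.
  have hcb := upper_gen (F:=F) e_sym e_irr Hgrow (leqnn #|S|) Wj.
  by move: hS; rewrite /= (betti_eq0 hcb).
have ne : (0 < #|[pred P | admissible e P && [forall A in P, A \subset setT]]|)%N.
  apply/card_gt0P; exists set0; rewrite inE /=.
  by apply/andP; split; [apply/and3P; split|]; apply/forall_inP => A; rewrite inE.
case: (eq_bigmax_cond (weight e) ne) => P /andP[aP _] PW.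
rewrite /Wt PW.
have aP' := aP; case/and3P: aP' => /forall_inP hk /forall_inP hd /forall_inP he.
have hall : all (fun A => isK2 e A || isC5 e A) (enum P).
  by apply/allP => A; rewrite mem_enum; exact: hk.
have hpw : pairwise (sepr e) (enum P).
  apply: uniq_pairwise; first exact: enum_uniq.
  move=> A B; rewrite !mem_enum => AP BP AB.
  by rewrite /sepr (implyP (forall_inP (hd A AP) B BP) AB) (implyP (forall_inP (he A AP) B BP) AB).
have [z [sz cz [A0 zA0] bz]] := build F e_sym e_irr hall hpw.
rewrite wsum_weight // in sz bz.
have hb := betti_lower sz cz (ex_intro _ A0 zA0) bz.
have hlt : (weight e P < #|T|.+2)%N.
  have /facesP [_ _ <-] := sz _ zA0.
  by apply: leq_trans (max_card _) _.
have := @leq_bigmax_cond _ (fun j : 'I_#|T|.+2 => [exists S : {set T}, betti e F S j != 0%N])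
  (fun j => nat_of_ord j) (Ordinal hlt).
apply; apply/existsP; by exists (Ucup (enum P)).
Qed.

End Final.

Section Graph.
Variables (T : finType) (e : rel T).
Hypotheses (e_sym : symmetric e) (e_irr : irreflexive e).
Hypotheses (hT : triangle_free e) (hP : P5_free e).

Lemma P5path (a b c d x : T) : e a b -> e b c -> e c d -> e d x ->
  ~~ e a c -> ~~ e a d -> ~~ e a x -> ~~ e b d -> ~~ e b x -> ~~ e c x -> False.
Proof.
move=> ab bc cd dx ac ad ax bd bx cx.
have ba : e b a by rewrite e_sym.
have cb : e c b by rewrite e_sym.
have dc : e d c by rewrite e_sym.
have xd : e x d by rewrite e_sym.
have ca : e c a = false by rewrite e_sym; apply/negbTE.
have da : e d a = false by rewrite e_sym; apply/negbTE.
have xa : e x a = false by rewrite e_sym; apply/negbTE.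
have db : e d b = false by rewrite e_sym; apply/negbTE.
have xb : e x b = false by rewrite e_sym; apply/negbTE.
have xc : e x c = false by rewrite e_sym; apply/negbTE.
move/negbTE: ac => ac; move/negbTE: ad => ad; move/negbTE: ax => ax.
move/negbTE: bd => bd; move/negbTE: bx => bx; move/negbTE: cx => cx.
have nab : a != b by apply: contraTneq ab => ->; rewrite e_irr.
have nbc : b != c by apply: contraTneq bc => ->; rewrite e_irr.
have ncd : c != d by apply: contraTneq cd => ->; rewrite e_irr.
have ndx : d != x by apply: contraTneq dx => ->; rewrite e_irr.
have nac : a != c by apply: contraTneq cd => <-; rewrite ad.
have nad : a != d by apply: contraTneq cd => <-; rewrite ca.
have nax : a != x by apply: contraTneq dx => <-; rewrite da.
have nbd : b != d by apply: contraTneq ab => ->; rewrite ad.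
have nbx : b != x by apply: contraTneq ab => ->; rewrite ax.
have ncx : c != x by apply: contraTneq bc => ->; rewrite bx.
have qab : (a == b) = false by apply/negbTE; rewrite  nab.
have qac : (a == c) = false by apply/negbTE; rewrite  nac.
have qad : (a == d) = false by apply/negbTE; rewrite  nad.
have qax : (a == x) = false by apply/negbTE; rewrite  nax.
have qba : (b == a) = false by apply/negbTE; rewrite eq_sym nab.
have qbc : (b == c) = false by apply/negbTE; rewrite  nbc.
have qbd : (b == d) = false by apply/negbTE; rewrite  nbd.
have qbx : (b == x) = false by apply/negbTE; rewrite  nbx.
have qca : (c == a) = false by apply/negbTE; rewrite eq_sym nac.
have qcb : (c == b) = false by apply/negbTE; rewrite eq_sym nbc.
have qcd : (c == d) = false by apply/negbTE; rewrite  ncd.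
have qcx : (c == x) = false by apply/negbTE; rewrite  ncx.
have qda : (d == a) = false by apply/negbTE; rewrite eq_sym nad.
have qdb : (d == b) = false by apply/negbTE; rewrite eq_sym nbd.
have qdc : (d == c) = false by apply/negbTE; rewrite eq_sym ncd.
have qdx : (d == x) = false by apply/negbTE; rewrite  ndx.
have qxa : (x == a) = false by apply/negbTE; rewrite eq_sym nax.
have qxb : (x == b) = false by apply/negbTE; rewrite eq_sym nbx.
have qxc : (x == c) = false by apply/negbTE; rewrite eq_sym ncx.
have qxd : (x == d) = false by apply/negbTE; rewrite eq_sym ndx.
pose f (i : 'I_5) := nth a [:: a; b; c; d; x] i.
apply: (hP (f := f)).
  move=> i k; rewrite /f => h; apply/eqP; move: h.
  case: i k => [[|[|[|[|[|i]]]]] hi] [[|[|[|[|[|k]]]]] hk] //= /eqP; by rewrite ?qab ?qac ?qad ?qax ?qba ?qbc ?qbd ?qbx ?qca ?qcb ?qcd ?qcx ?qda ?qdb ?qdc ?qdx ?qxa ?qxb ?qxc ?qxd.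
move=> [[|[|[|[|[|i]]]]] hi] [[|[|[|[|[|k]]]]] hk] //=; rewrite /f /= ?e_irr //.
Qed.

Lemma mkC5 (a b c d x : T) : e a b -> e b c -> e c d -> e d x -> e x a ->
  ~~ e a c -> ~~ e a d -> ~~ e b d -> ~~ e b x -> ~~ e c x ->
  isC5 e [set y | y \in [:: a; b; c; d; x]].
Proof.
move=> ab bc cd dx xa ac ad bd bx cx.
have ba : e b a by rewrite e_sym.
have cb : e c b by rewrite e_sym.
have dc : e d c by rewrite e_sym.
have xd : e x d by rewrite e_sym.
have ax : e a x by rewrite e_sym.
have ca : e c a = false by rewrite e_sym; apply/negbTE.
have da : e d a = false by rewrite e_sym; apply/negbTE.
have db : e d b = false by rewrite e_sym; apply/negbTE.
have xb : e x b = false by rewrite e_sym; apply/negbTE.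
have xc : e x c = false by rewrite e_sym; apply/negbTE.
move/negbTE: ac => ac; move/negbTE: ad => ad.
move/negbTE: bd => bd; move/negbTE: bx => bx; move/negbTE: cx => cx.
have nab : a != b by apply: contraTneq ab => ->; rewrite e_irr.
have nbc : b != c by apply: contraTneq bc => ->; rewrite e_irr.
have ncd : c != d by apply: contraTneq cd => ->; rewrite e_irr.
have ndx : d != x by apply: contraTneq dx => ->; rewrite e_irr.
have nax : a != x by apply: contraTneq ax => ->; rewrite e_irr.
have nac : a != c by apply: contraTneq cd => <-; rewrite ad.
have nad : a != d by apply: contraTneq cd => <-; rewrite ca.
have nbd : b != d by apply: contraTneq ab => ->; rewrite ad.
have nbx : b != x by apply: contraTneq bc => ->; rewrite xc.
have ncx : c != x by apply: contraTneq bc => ->; rewrite bx.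
have qab : (a == b) = false by apply/negbTE; rewrite  nab.
have qac : (a == c) = false by apply/negbTE; rewrite  nac.
have qad : (a == d) = false by apply/negbTE; rewrite  nad.
have qax : (a == x) = false by apply/negbTE; rewrite  nax.
have qba : (b == a) = false by apply/negbTE; rewrite eq_sym nab.
have qbc : (b == c) = false by apply/negbTE; rewrite  nbc.
have qbd : (b == d) = false by apply/negbTE; rewrite  nbd.
have qbx : (b == x) = false by apply/negbTE; rewrite  nbx.
have qca : (c == a) = false by apply/negbTE; rewrite eq_sym nac.
have qcb : (c == b) = false by apply/negbTE; rewrite eq_sym nbc.
have qcd : (c == d) = false by apply/negbTE; rewrite  ncd.
have qcx : (c == x) = false by apply/negbTE; rewrite  ncx.
have qda : (d == a) = false by apply/negbTE; rewrite eq_sym nad.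
have qdb : (d == b) = false by apply/negbTE; rewrite eq_sym nbd.
have qdc : (d == c) = false by apply/negbTE; rewrite eq_sym ncd.
have qdx : (d == x) = false by apply/negbTE; rewrite  ndx.
have qxa : (x == a) = false by apply/negbTE; rewrite eq_sym nax.
have qxb : (x == b) = false by apply/negbTE; rewrite eq_sym nbx.
have qxc : (x == c) = false by apply/negbTE; rewrite eq_sym ncx.
have qxd : (x == d) = false by apply/negbTE; rewrite eq_sym ndx.
pose f := [ffun i : 'I_5 => nth a [:: a; b; c; d; x] i].
apply/existsP; exists f; apply/and3P; split.
- apply/injectiveP => i k; rewrite !ffunE => h; apply/eqP; move: h.
  case: i k => [[|[|[|[|[|i]]]]] hi] [[|[|[|[|[|k]]]]] hk] //= /eqP; by rewrite ?qab ?qac ?qad ?qax ?qba ?qbc ?qbd ?qbx ?qca ?qcb ?qcd ?qcx ?qda ?qdb ?qdc ?qdx ?qxa ?qxb ?qxc ?qxd.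
- apply/eqP/setP => y; rewrite inE; apply/idP/imsetP.
    rewrite !inE => /orP [/eqP->|/orP [/eqP->|/orP [/eqP->|/orP [/eqP->|/eqP->]]]].
    + by exists (@Ordinal 5 0 isT); rewrite ?ffunE.
    + by exists (@Ordinal 5 1 isT); rewrite ?ffunE.
    + by exists (@Ordinal 5 2 isT); rewrite ?ffunE.
    + by exists (@Ordinal 5 3 isT); rewrite ?ffunE.
    + by exists (@Ordinal 5 4 isT); rewrite ?ffunE.
  move=> [[[|[|[|[|[|i]]]]] hi] _ ->] //; by rewrite ffunE !inE eqxx ?orbT.
- apply/forallP => i; apply/forallP => k; rewrite !ffunE.
  case: i k => [[|[|[|[|[|i]]]]] hi] [[|[|[|[|[|k]]]]] hk] //=;
  by rewrite ?e_irr ?ab ?bc ?cd ?dx ?xa ?ba ?cb ?dc ?xd ?ax ?ac ?ad ?bd ?bx ?cx ?ca ?da ?db ?xb ?xc.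
Qed.

Lemma adm_intro (P : {set {set T}}) :
  (forall A, A \in P -> isK2 e A || isC5 e A) ->
  (forall A B x y, A \in P -> B \in P -> A != B -> x \in A -> y \in B -> (x != y) && ~~ e x y) ->
  admissible e P.
Proof.
move=> hk hs; apply/and3P; split.
- by apply/forall_inP.
- apply/forall_inP => A AP; apply/forall_inP => B BP; apply/implyP => AB.
  apply/pred0P => x /=; apply/negbTE/negP => /andP[xA xB].
  by have := hs A B x x AP BP AB xA xB; rewrite eqxx.
- apply/forall_inP => A AP; apply/forall_inP => B BP; apply/implyP => AB.
  apply/forall_inP => x xA; apply/forall_inP => y yB.
  by have /andP[] := hs A B x y AP BP AB xA yB.
Qed.

Lemma adm_elim (P : {set {set T}}) : admissible e P ->
  (forall A, A \in P -> isK2 e A || isC5 e A) /\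
  (forall A B x y, A \in P -> B \in P -> A != B -> x \in A -> y \in B -> (x != y) && ~~ e x y).
Proof.
case/and3P => /forall_inP hk /forall_inP hd /forall_inP he; split=> // A B x y AP BP AB xA yB.
have dAB := implyP (forall_inP (hd A AP) B BP) AB.
have eAB := implyP (forall_inP (he A AP) B BP) AB.
rewrite (forall_inP (forall_inP eAB x xA) y yB) andbT.
by apply: contraTneq yB => <-; rewrite (disjointFr dAB xA).
Qed.

Lemma weight_add (C : {set T}) (Q : {set {set T}}) : isK2 e C -> C \notin Q ->
  weight e (C |: Q) = (weight e Q).+1.
Proof.
move=> hC CQ; rewrite /weight.
have -> : [set A in C |: Q | isK2 e A] = C |: [set A in Q | isK2 e A].
  by apply/setP => A; rewrite !inE; case: (eqVneq A C) => [->|] //=; rewrite hC.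
have -> : [set A in C |: Q | isC5 e A] = [set A in Q | isC5 e A].
  apply/setP => A; rewrite !inE; case: (eqVneq A C) => [->|] //=.
  by rewrite (negbTE (K2notC5 hC)) andbF.
by rewrite cardsU1 inE (negbTE CQ) /= add1n addSn.
Qed.

Lemma weight_swap (H C : {set T}) (P : {set {set T}}) : H \in P -> isK2 e H -> isC5 e C ->
  C \notin P -> weight e (C |: (P :\ H)) = (weight e P).+1.
Proof.
move=> HP hH hC CP; rewrite /weight.
have CH : C != H by apply: contraNneq CP => ->.
have -> : [set A in C |: (P :\ H) | isK2 e A] = [set A in P | isK2 e A] :\ H.
  apply/setP => A; rewrite !inE; case: (eqVneq A C) => [->|AC] /=.
    have nK : isK2 e C = false by apply/negbTE; apply: contraTN hC; exact: K2notC5.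
    by rewrite nK (negbTE CP) !andbF.
  by rewrite andbA.
have -> : [set A in C |: (P :\ H) | isC5 e A] = C |: [set A in P | isC5 e A].
  apply/setP => A; rewrite !inE; case: (eqVneq A C) => [->|AC] /=; first by rewrite hC.
  by case: (eqVneq A H) => [->|] //=; rewrite (negbTE (K2notC5 hH)) andbF.
rewrite cardsU1 inE (negbTE CP) /= add1n.
have := cardsD1 H [set A in P | isK2 e A]; rewrite inE HP hH /= add1n => ->.
by rewrite mulnS !addnS addSn.
Qed.

Lemma C5_around (H : {set T}) (x : T) : isC5 e H -> x \in H -> exists h1 h2 h3 h4,
  [/\ [&& h1 \in H, h2 \in H, h3 \in H & h4 \in H], e x h1 && e h1 h2, e x h4 && e h4 h3,
      e h2 h3 & ~~ e x h2 && ~~ e x h3].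
Proof.
case/isC5P => f [fi HE fe]; rewrite HE => /imsetP [i _ ->].
case: i => [[|[|[|[|[|i]]]]] hi] //.
  - by exists (f (@Ordinal 5 1 isT)), (f (@Ordinal 5 2 isT)), (f (@Ordinal 5 3 isT)), (f (@Ordinal 5 4 isT)); rewrite !fe !imset_f.
  - by exists (f (@Ordinal 5 2 isT)), (f (@Ordinal 5 3 isT)), (f (@Ordinal 5 4 isT)), (f (@Ordinal 5 0 isT)); rewrite !fe !imset_f.
  - by exists (f (@Ordinal 5 3 isT)), (f (@Ordinal 5 4 isT)), (f (@Ordinal 5 0 isT)), (f (@Ordinal 5 1 isT)); rewrite !fe !imset_f.
  - by exists (f (@Ordinal 5 4 isT)), (f (@Ordinal 5 0 isT)), (f (@Ordinal 5 1 isT)), (f (@Ordinal 5 2 isT)); rewrite !fe !imset_f.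
  - by exists (f (@Ordinal 5 0 isT)), (f (@Ordinal 5 1 isT)), (f (@Ordinal 5 2 isT)), (f (@Ordinal 5 3 isT)); rewrite !fe !imset_f.
Qed.

Lemma tri (a b c : T) : e a b -> e b c -> ~~ e a c.
Proof. by move=> ab bc; apply/negP => ac; exact: hT ab bc ac. Qed.

Lemma comp_nbr (A : {set T}) t : isK2 e A || isC5 e A -> t \in A -> exists2 t', t' \in A & e t t'.
Proof.
case/orP => [/isK2P [a [b [-> ab eab]]]|hC tA].
  rewrite !inE => /orP [/eqP ->|/eqP ->].
    by exists b; rewrite ?eab // !inE eqxx orbT.
  by exists a; rewrite ?inE ?eqxx // e_sym.
have [h1 [h2 [h3 [h4 [/and4P [h1H _ _ _] /andP [th1 _] _ _ _]]]]] := C5_around hC tA.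
by exists h1.
Qed.

Lemma adm_sub (Q P : {set {set T}}) : Q \subset P -> admissible e P -> admissible e Q.
Proof.
move=> sQP /adm_elim [hk hs]; apply: adm_intro => [A AQ|A B x y AQ BQ].
  exact: hk (subsetP sQP A AQ).
exact: hs (subsetP sQP A AQ) (subsetP sQP B BQ).
Qed.

Lemma adm_add (C : {set T}) (Q : {set {set T}}) : admissible e Q -> isK2 e C || isC5 e C ->
  (forall B x y, B \in Q -> x \in C -> y \in B -> (x != y) && ~~ e x y) ->
  admissible e (C |: Q).
Proof.
move=> /adm_elim [hk hs] hC hsep; apply: adm_intro => [A|A B x y].
  by rewrite in_setU1 => /orP [/eqP ->|/hk].
rewrite !in_setU1 => /orP [/eqP ->|AQ] /orP [/eqP ->|BQ] AB xA yB.
- by move: AB; rewrite eqxx.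
- exact: hsep B x y BQ xA yB.
- by have /andP [h1 h2] := hsep A y x AQ yB xA; rewrite eq_sym h1 e_sym.
- exact: hs AQ BQ AB xA yB.
Qed.

Lemma grow (S : {set T}) (v : T) (P : {set {set T}}) :
  v \in S -> (exists2 u, u \in S & e v u) ->
  (forall w, w \in S -> deg e S w <= deg e S v)%N ->
  admissible e P -> (forall A, A \in P -> A \subset [set u in S | (u != v) && ~~ e v u]) ->
  exists P', [/\ admissible e P', (forall A, A \in P' -> A \subset S) &
                 weight e P' = (weight e P).+1].
Proof.
move=> vS [u0 u0S vu0] vmax aP sP.
have [hk hs] := adm_elim aP.
have hN : forall A t, A \in P -> t \in A -> [&& t \in S, t != v & ~~ e v t].
  by move=> A t AP tA; have := subsetP (sP A AP) t tA; rewrite inE.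
have sPS : forall A, A \in P -> A \subset S.
  by move=> A AP; apply/subsetP => t tA; case/and3P: (hN A t AP tA).
have vnP : forall A, A \in P -> v \notin A.
  by move=> A AP; apply/negP => vA; case/and3P: (hN A v AP vA); rewrite eqxx.
have nbP : forall A u, A \in P -> e v u -> u \notin A.
  by move=> A u AP vu; apply/negP => uA; case/and3P: (hN A u AP uA); rewrite vu.
case: (boolP [exists u in S, e v u && [forall A in P, forall t in A, ~~ e u t]]).
  case/exists_inP => u uS /andP [vu /forall_inP hu].
  have hCK : isK2 e [set v; u].
    apply/existsP; exists v; apply/existsP; exists u; rewrite eqxx vu andbT /=.
    by apply: contraTneq vu => ->; rewrite e_irr.
  have CP : [set v; u] \notin P.
    by apply/negP => /vnP; rewrite !inE eqxx.
  exists ([set v; u] |: P); split.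
  - apply: adm_add => //; first by rewrite hCK.
    move=> B x y BP; rewrite !inE => /orP [/eqP ->|/eqP ->] yB.
      by case/and3P: (hN B y BP yB) => _ yv ->; rewrite eq_sym yv.
    rewrite (forall_inP (hu B BP) y yB) andbT.
    by apply: contraTneq yB => <-; exact: nbP.
  - move=> A; rewrite in_setU1 => /orP [/eqP ->|/sPS //].
    by rewrite subUset !sub1set vS uS.
  - exact: weight_add.
move=> /exists_inPn hn.
have hnb : forall u, u \in S -> e v u -> exists A t, [/\ A \in P, t \in A & e u t].
  move=> u uS vu; have := hn u uS; rewrite vu /= => /forall_inPn [A AP /forall_inPn [t tA]].
  by rewrite negbK => ut; exists A, t.
have [H [x [HP xH u0x]]] := hnb u0 u0S vu0.
have [xS xv vx] := and3P (hN H x HP xH).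
case/orP: (hk H HP) => [hK|hC]; last first.
  have [h1 [h2 [h3 [h4 [/and4P [h1H h2H h3H h4H] /andP [xh1 h12] /andP [xh4 h43] h23
       /andP [xh2 xh3]]]]]] := C5_around hC xH.
  have vh : forall h, h \in H -> ~~ e v h by move=> h hH; case/and3P: (hN H h HP hH).
  have u0h2 : e u0 h2.
    apply/negPn/negP => nh; apply: (P5path vu0 u0x xh1 h12) => //; rewrite ?vh //.
    exact: tri u0x xh1.
  have u0h3 : e u0 h3.
    apply/negPn/negP => nh; apply: (P5path vu0 u0x xh4 h43) => //; rewrite ?vh //.
    exact: tri u0x xh4.
  by move: (tri u0h2 h23); rewrite u0h3.
have [y [yH xy]] : exists y, y \in H /\ e x y.
  case/isK2P: hK xH => a [b [HE ab eab]]; rewrite HE !inE => /orP [/eqP ->|/eqP ->].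
    by exists b; rewrite !inE eqxx orbT.
  by exists a; rewrite !inE eqxx e_sym.
have [yS yv vy] := and3P (hN H y HP yH).
have yx : e y x by rewrite e_sym.
have u0y : ~~ e u0 y by exact: tri u0x xy.
have claim1 : forall u, u \in S -> e v u -> e u x || e u y.
  move=> u uS vu; apply/negPn/negP; rewrite negb_or => /andP [nux nuy].
  have uv : e u v by rewrite e_sym.
  apply: (P5path uv vu0 u0x xy) => //; exact: tri uv vu0.
have [u2 u2S /andP [vu2 u2y]] : exists2 u2, u2 \in S & e v u2 && e u2 y.
  case: (boolP [exists u in S, e v u && e u y]) => [/exists_inP [u2 ? ?]|hno].
    by exists u2.
  have hpr : [set w in S | e v w] \proper [set w in S | e x w].
    apply/properP; split.
      apply/subsetP => w; rewrite !inE => /andP [wS vw]; rewrite wS /=.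
      have := claim1 w wS vw; case/orP => [wx|wy]; first by rewrite e_sym.
      by move/exists_inPn: hno => /(_ w wS); rewrite vw wy.
    by exists y; rewrite !inE ?yS ?xy // (negbTE vy) andbF.
  by have := vmax x xS; rewrite /deg leqNgt (proper_card hpr).
have u2v : e u2 v by rewrite e_sym.
have yu2 : e y u2 by rewrite e_sym.
have xu2 : ~~ e x u2 by exact: tri xy yu2.
have u0u2 : ~~ e u0 u2 by apply: tri _ vu2; rewrite e_sym.
pose C := [set w | w \in [:: v; u0; x; y; u2]].
have hC : isC5 e C by apply: mkC5.
have claim3 : forall B t, B \in P -> B != H -> t \in B -> ~~ e u0 t && ~~ e u2 t.
  move=> B t BP BH tB.
  have [t' t'B tt'] := comp_nbr (hk B BP) tB.
  have HB : H != B by rewrite eq_sym.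
  have [_ nxt] := andP (hs H B x t HP BP HB xH tB).
  have [_ nxt'] := andP (hs H B x t' HP BP HB xH t'B).
  have [_ nyt] := andP (hs H B y t HP BP HB yH tB).
  have [_ nyt'] := andP (hs H B y t' HP BP HB yH t'B).
  apply/andP; split; apply/negP => ht.
    apply: (P5path yx (_ : e x u0) ht tt') => //; first by rewrite e_sym.
      by rewrite e_sym.
    exact: tri ht tt'.
  apply: (P5path xy yu2 ht tt') => //; exact: tri ht tt'.
have vC : v \in C by rewrite inE !inE eqxx.
have CP : C \notin P by apply/negP => /vnP; rewrite vC.
exists (C |: (P :\ H)); split.
- apply: adm_add; first (apply: adm_sub aP; exact: subD1set); first by rewrite hC orbT.
  move=> B w t; rewrite in_setD1 => /andP [BH BP] wC tB.
  have [tS tv vt] := and3P (hN B t BP tB).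
  have HB : H != B by rewrite eq_sym.
  have [c3a c3b] := andP (claim3 B t BP BH tB).
  move: wC; rewrite inE !inE => /orP [/eqP ->|/orP [/eqP ->|/orP [/eqP ->|/orP [/eqP ->|/eqP ->]]]].
  + by rewrite eq_sym tv vt.
  + by rewrite c3a andbT; apply: contraTneq tB => <-; exact: nbP.
  + exact: hs H B x t HP BP HB xH tB.
  + exact: hs H B y t HP BP HB yH tB.
  + by rewrite c3b andbT; apply: contraTneq tB => <-; exact: nbP.
- move=> A; rewrite in_setU1 => /orP [/eqP ->|]; last first.
    by rewrite in_setD1 => /andP [_ /sPS].
  apply/subsetP => w; rewrite inE !inE.
  by case/orP => [/eqP ->|/orP [/eqP ->|/orP [/eqP ->|/orP [/eqP ->|/eqP ->]]]].
- exact: weight_swap.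
Qed.

End Graph.

Lemma Hgrow_proof (T : finType) (e : rel T) (e_sym : symmetric e) (e_irr : irreflexive e)
  (hT : triangle_free e) (hP : P5_free e) :
  forall (S : {set T}) (v : T), v \in S -> (exists2 u, u \in S & e v u) ->
     (forall w, w \in S -> deg e S w <= deg e S v)%N ->
     (Wt e [set u in S | (u != v) && ~~ e v u] < Wt e S)%N.
Proof.
move=> S v vS hu vmax.
set N := [set u in S | _].
have ne : (0 < #|[pred P | admissible e P && [forall A in P, A \subset N]]|)%N.
  apply/card_gt0P; exists set0; rewrite inE /=.
  by apply/andP; split; [apply/and3P; split|]; apply/forall_inP => A; rewrite inE.
case: (eq_bigmax_cond (weight e) ne) => P /andP [aP /forall_inP sP] PW.
rewrite /Wt PW.
have [P' [aP' sP' wP']] := grow e_sym e_irr hT hP vS hu vmax aP sP.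
rewrite -ltnS -wP' ltnS; apply: leq_bigmax_cond; rewrite aP' /=.
by apply/forall_inP.
Qed.

Theorem mainTheorem5 (F : fieldType) (T : finType) (e : rel T)
  (e_sym : symmetric e) (e_irr : irreflexive e)
  (hT : triangle_free e) (hP : P5_free e) :
  reg e F = \max_(P : {set {set T}} | admissible e P) weight e P.
Proof.
apply: (main_gen F e_sym e_irr). exact: (Hgrow_proof e_sym e_irr hT hP).
Qed.
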